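(* Let $k,p>0$ be integers and let $U$ be a function assignment for $\mathbb{N}^k$. Then there exist a finite set $A\subseteq\mathbb{N}^k$ and a set $E\subseteq\mathbb{N}$ with $|E|=p$ and $E^k\subseteq A$ such that $U(A)$ has at most $k^k\,p$ regressive values on $E^k$.
   Context: $\mathbb{N}=\{0,1,2,\dots\}$. For $x\in\mathbb{N}^k$, $\min(x)$ is the minimum coordinate and $|x|$ the maximum coordinate of $x$. A function assignment for a set $S$ is a map $U$ assigning to each finite subset $A\subseteq S$ a function $U(A):A\to A$. For $B\subseteq\mathbb{N}^k$ and a function $F$ defined on $B$ with values in $\mathbb{N}^k$, $y$ is a regressive value of $F$ on $B$ iff there exists $x\in B$ with $F(x)=y$ and $|y|<\min(x)$. *)

(* Defs.v *)
From mathcomp Require Import all_boot.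
From mathcomp Require Export finmap.
Set Implicit Arguments. Unset Strict Implicit. Unset Printing Implicit Defensive.
Open Scope fset_scope.

Definition pt (k : nat) := (k.-tuple nat)%type.

Definition tmax k (x : pt k) : nat := foldr maxn 0 x.
(* min(x) = minimum coordinate (only meaningful for k > 0). *)
Definition tmin k (x : pt k) : nat := foldr minn (head 0 x) x.

Definition fun_assignment (k : nat) :=
  forall A : {fset pt k}, A -> A.

Definition in_power k (E : {fset nat}) (x : pt k) : bool := all (fun a => a \in E) x.

Definition regressive_values k (U : fun_assignment k) (A : {fset pt k})
  (E : {fset nat}) : {fset pt k} :=
  [fset val (U A x) | x : A & in_power E (val x) && (tmax (val (U A x)) < tmin (val x))].

(* Main.v *)
Require Import Defs.
From mathcomp Require Import all_boot finmap.
From Stdlib Require Import Classical ClassicalEpsilon.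
Set Implicit Arguments. Unset Strict Implicit. Unset Printing Implicit Defensive.
Open Scope fset_scope.
Definition box k n : seq (pt k) := [seq map_tuple (@nat_of_ord n.+1) t | t : k.-tuple 'I_n.+1].

Definition inf (X : nat -> Prop) := forall N, exists n, N <= n /\ X n.

Lemma pigeon (V : eqType) (S : nat -> Prop) (f : nat -> V) (L : seq V) :
  inf S -> (forall n, S n -> f n \in L) ->
  exists2 v, v \in L & inf (fun n => S n /\ f n = v).
Proof.
elim: L S => [|v L IH] S HS Hf.
  by have [n [_ Sn]] := HS 0; have := Hf n Sn.
case: (classic (inf (fun n => S n /\ f n = v))) => Hv.
  by exists v => //; rewrite inE eqxx.
have [N0 HN0] : exists N0, forall n, N0 <= n -> S n -> f n <> v.
  apply: NNPP => H; apply: Hv => N.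
  apply: NNPP => H2; apply: H; exists N => n Hn Sn Hfn; apply: H2; exists n; tauto.
have H1 : inf (fun n => S n /\ N0 <= n).
  move=> N; have [n [Hn Sn]] := HS (maxn N N0); exists n.
  by rewrite geq_max in Hn; case/andP: Hn => -> ->.
have H2 : forall n, S n /\ N0 <= n -> f n \in L.
  move=> n [Sn Hn]; have := Hf n Sn; rewrite inE => /orP[/eqP|//].
  by move=> E; have := HN0 n Hn Sn.
have [w wL Hw] := IH _ H1 H2.
exists w; first by rewrite inE wL orbT.
move=> N; have [n [Hn [[Sn _] fw]]] := Hw N; exists n; tauto.
Qed.

Lemma mono_lt (a : nat -> nat) : (forall i, a i < a i.+1) ->
  forall i j, (i < j) = (a i < a j).
Proof.
move=> Ha.
have H1 : forall i j, i < j -> a i < a j.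
  move=> i; elim=> // j IH; rewrite ltnS leq_eqVlt => /orP[/eqP->//|/IH h].
  exact: ltn_trans h (Ha j).
have H2 : forall i j, i <= j -> a i <= a j.
  move=> i j; rewrite leq_eqVlt => /orP[/eqP->//|/H1]; exact: ltnW.
move=> i j; apply/idP/idP; first exact: H1.
by apply: contraLR; rewrite -!leqNgt; exact: H2.
Qed.

Lemma mono_ge (a : nat -> nat) : (forall i, a i < a i.+1) -> forall i, i <= a i.
Proof. move=> Ha; elim=> // i IH; exact: leq_ltn_trans IH (Ha i). Qed.

Definition Ramsey (r : nat) := forall (V : eqType) (L : seq V) (c : seq nat -> V)
  (X : nat -> Prop), inf X -> (forall s, c s \in L) ->
  exists Y : nat -> Prop, [/\ inf Y, (forall n, Y n -> X n) &
    exists2 v, v \in L & forall s, sorted ltn s -> size s = r ->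
      (forall b, b \in s -> Y b) -> c s = v].

Lemma Ramsey0 : Ramsey 0.
Proof.
move=> V L c X HX HL; exists X; split=> //; exists (c [::]) => //.
by case.
Qed.

Section Step.
Variables (r : nat) (HR : Ramsey r) (V : eqType) (L : nat -> seq V)
  (c : seq nat -> V) (HL : forall a B, c (a :: B) \in L a).

Definition Pst (Z : nat -> Prop) (w : nat * (nat -> Prop) * V) :=
  let: (a, Z', v) := w in
  [/\ Z a, inf Z', (forall b, Z' b -> Z b /\ a < b), v \in L a &
      forall B, sorted ltn B -> size B = r -> (forall b, b \in B -> Z' b) ->
        c (a :: B) = v].

Lemma Pst_ex Z : inf Z -> exists w, Pst Z w.
Proof.
move=> HZ; have [a [_ Za]] := HZ 0.
have HZ' : inf (fun b => Z b /\ a < b).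
  move=> N; have [n [Hn Zn]] := HZ (maxn N a.+1); exists n.
  by rewrite geq_max in Hn; case/andP: Hn.
have [Y [HY YZ [v vL Hv]]] := @HR _ (L a) (fun B => c (a :: B)) _ HZ' (fun B => HL a B).
exists (a, Y, v); split=> //.
Qed.

Definition nxt (Z : nat -> Prop) : nat * (nat -> Prop) * V :=
  epsilon (inhabits (0, Z, c [::])) (Pst Z).

Fixpoint Zs (X : nat -> Prop) (i : nat) : nat -> Prop :=
  if i is i'.+1 then (nxt (Zs X i')).1.2 else X.

Lemma step (X : nat -> Prop) : inf X ->
  exists (a : nat -> nat) (col : nat -> V),
  [/\ (forall i, a i < a i.+1), (forall i, X (a i)), (forall i, col i \in L (a i)) &
   forall i B, sorted ltn B -> size B = r ->
     (forall b, b \in B -> exists2 j, i < j & b = a j) -> c (a i :: B) = col i].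
Proof.
move=> HX.
have HP : forall i, inf (Zs X i) /\ Pst (Zs X i) (nxt (Zs X i)).
  elim=> [|i [IH1 IH2]].
    by split=> //; apply: epsilon_spec; apply: Pst_ex.
  have H1 : inf (Zs X i.+1).
    by move: IH2; rewrite /= /Pst; case: (nxt (Zs X i)) => [[a Z'] v] [].
  by split=> //; apply: epsilon_spec; apply: Pst_ex.
pose a i := (nxt (Zs X i)).1.1.
pose col i := (nxt (Zs X i)).2.
have Ha : forall i, Zs X i (a i).
  by move=> i; have [_] := HP i; rewrite /a /Pst; case: (nxt (Zs X i)) => [[? ?] ?] [].
have Hs : forall i b, Zs X i.+1 b -> Zs X i b /\ a i < b.
  move=> i b; have [_] := HP i; rewrite /a /= /Pst.
  case: (nxt (Zs X i)) => [[a0 Z0] v0] /= [_ _ H _ _]; exact: H.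
have Hsub : forall i j, i <= j -> forall b, Zs X j b -> Zs X i b.
  move=> i j /subnK <-; elim: (j - i) => // d IH b /Hs [] /IH //.
exists a, col; split.
- by move=> i; have [] := Hs i _ (Ha i.+1).
- by move=> i; exact: (Hsub 0 i _ _ (Ha i)).
- by move=> i; have [_] := HP i; rewrite /a /col /Pst; case: (nxt (Zs X i)) => [[? ?] ?] [].
- move=> i B sB sz HB; have [_] := HP i.
  rewrite /a /col /Pst /=; case E: (nxt (Zs X i)) => [[a0 Z'] v] [_ _ _ _ Hh].
  apply: Hh => // b /HB [j ij ->].
  have := Hsub i.+1 j ij _ (Ha j); by rewrite /= E.
Qed.
End Step.

Lemma RamseyS r : Ramsey r -> Ramsey r.+1.
Proof.
move=> HR V L c X HX HL.
have [a [col [Ha HXa HcolL Hh]]] := step HR (L := fun _ => L) (fun a B => HL (a :: B)) HX.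
have [v vL Hv] := pigeon (S := fun _ => True) (f := col) (fun N => ex_intro _ N (conj (leqnn N) I)) (fun n _ => HcolL n).
exists (fun b => exists2 i, col i = v & b = a i); split.
- move=> N; have [i [Ni [_ ci]]] := Hv N; exists (a i); split.
    exact: leq_trans Ni (mono_ge Ha i).
  by exists i.
- by move=> n [i _ ->].
exists v => // -[|x B] //= sB [sz] HY.
have [i ci xe] := HY x (mem_head _ _); rewrite xe -ci; apply: Hh => //.
- exact: path_sorted sB.
- move=> b bB; have [j _ be] := HY b (mem_behead (s := x :: B) bB).
  exists j => //; rewrite (mono_lt Ha) -be -xe.
  by have := order_path_min ltn_trans sB => /allP; apply.
Qed.

Lemma ramsey r : Ramsey r.
Proof. elim: r => [|r IH]; [exact: Ramsey0 | exact: RamseyS]. Qed.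
Definition MH (V : Type) (c : seq nat -> V) (Y : nat -> Prop) r :=
  forall a B B', Y a -> path ltn a B -> path ltn a B' -> size B = r -> size B' = r ->
   (forall b, b \in B -> Y b) -> (forall b, b \in B' -> Y b) -> c (a :: B) = c (a :: B').

Lemma MH_sub (V : Type) (c : seq nat -> V) (Y Y' : nat -> Prop) r :
  (forall n, Y' n -> Y n) -> MH c Y r -> MH c Y' r.
Proof.
move=> HY H a B B' Ya p1 p2 s1 s2 h1 h2; apply: H => //; auto.
Qed.

Lemma MH_many (T V : eqType) (L : nat -> seq V) (g : T -> seq nat -> V) r :
  (forall t a B, g t (a :: B) \in L a) -> forall (ts : seq T) X, inf X ->
  exists Y, [/\ inf Y, (forall n, Y n -> X n) & forall t, t \in ts -> MH (g t) Y r].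
Proof.
move=> HL; elim=> [|t ts IH] X HX; first by exists X.
have [Y1 [HY1 Y1X HM]] := IH X HX.
have [a [col [Ha HXa _ Hh]]] := step (ramsey r) (HL t) HY1.
have Hb : forall i B, path ltn (a i) B -> (forall b, b \in B -> exists i, b = a i) ->
   forall b, b \in B -> exists2 j, i < j & b = a j.
  move=> i B pB HB b bB; have [j bj] := HB b bB; exists j => //.
  rewrite (mono_lt Ha) -bj.
  by have := order_path_min ltn_trans pB => /allP; apply.
exists (fun b => exists i, b = a i); split.
- move=> N; exists (a N); split; [exact: mono_ge | by exists N].
- by move=> n [i ->]; apply: Y1X.
move=> t'; rewrite inE => /orP[/eqP->|t'ts].
  move=> x B B' [i ->] p1 p2 s1 s2 h1 h2.
  rewrite (Hh i B) ?(Hh i B'); last first.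
  all: try first [done | exact: path_sorted p1 | exact: path_sorted p2 | exact: (Hb _ _ p1 h1) | exact: (Hb _ _ p2 h2)].
apply: (MH_sub _ (HM t' t'ts)) => n [i ->]; exact: HXa.
Qed.

Definition agree (V : Type) (h : nat -> nat -> V) (d : V) (s : seq V) (n : nat) :=
  forall i, i < size s -> h n i = nth d s i.

Section Compact.
Variables (V : eqType) (h : nat -> nat -> V) (L : nat -> seq V)
  (HL : forall n i, h n i \in L i).

Definition nxtv (s : seq V) : V :=
  epsilon (inhabits (h 0 0)) (fun v => inf (agree h (h 0 0) (rcons s v))).

Fixpoint Gs (m : nat) : seq V := if m is m'.+1 then rcons (Gs m') (nxtv (Gs m')) else [::].

Lemma size_Gs m : size (Gs m) = m.
Proof. by elim: m => //= m IH; rewrite size_rcons IH. Qed.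

Lemma inf_Gs m : inf (agree h (h 0 0) (Gs m)).
Proof.
elim: m => [|m IH] /=; first by move=> N; exists N; split.
apply: (epsilon_spec (inhabits (h 0 0)) (fun v => inf (agree h (h 0 0) (rcons (Gs m) v)))).
have [v vL Hv] := pigeon (f := fun n => h n (size (Gs m))) IH (fun n _ => HL n _).
exists v => N; have [n [Nn [Ha Hn]]] := Hv N; exists n; split=> // i.
rewrite size_rcons ltnS leq_eqVlt nth_rcons => /orP[/eqP->|lt]; first by rewrite ltnn eqxx.
by rewrite lt; apply: Ha.
Qed.

Lemma nth_Gs m i : i < m -> nth (h 0 0) (Gs m) i = nth (h 0 0) (Gs i.+1) i.
Proof.
elim: m => // m IH; rewrite ltnS leq_eqVlt => /orP[/eqP->//|lt].
by rewrite /= nth_rcons size_Gs lt IH.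
Qed.

Lemma compact : exists g : nat -> V, forall m N, exists n, N <= n /\
  forall i, i < m -> h n i = g i.
Proof.
exists (fun i => nth (h 0 0) (Gs i.+1) i) => m N.
have [n [Nn Hn]] := inf_Gs m N; exists n; split=> // i im.
by rewrite Hn ?size_Gs // nth_Gs.
Qed.
End Compact.

Lemma mem_box k n (x : pt k) : (x \in box k n) = all (fun a => a <= n) x.
Proof.
apply/idP/idP.
  case/mapP=> t _ ->; apply/allP => a /mapP [i _ ->]; by rewrite -ltnS ltn_ord.
move=> /allP Hx; apply/mapP; exists (map_tuple (fun a => inord a) x); first by rewrite mem_enum.
apply: val_inj => /=; rewrite -map_comp -[LHS]map_id; apply/eq_in_map => a ax /=.
by rewrite inordK // ltnS Hx.
Qed.

Lemma foldr_max_ge (s : seq nat) a : a \in s -> a <= foldr maxn 0 s.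
Proof.
elim: s => // b s IH; rewrite inE => /orP[/eqP->|/IH h] /=; rewrite leq_max ?leqnn //.
by rewrite h orbT.
Qed.

Lemma tmin_ge k (x : pt k) m : 0 < k -> (forall a, a \in x -> m <= a) -> m <= tmin x.
Proof.
rewrite /tmin => hk; case: x => [[|b s] /= sz] H; first by rewrite -(eqP sz) in hk.
have Hb : m <= b by apply: H; rewrite inE eqxx.
rewrite leq_min Hb /=.
have : forall a, a \in s -> m <= a by move=> a ax; apply: H; rewrite inE ax orbT.
elim: s {sz H hk} => //= c s IH H'; rewrite leq_min H' ?inE ?eqxx // IH //.
by move=> a ax; apply: H'; rewrite inE ax orbT.
Qed.

Lemma sorted_cat_lt (s1 s2 : seq nat) : sorted ltn s1 -> sorted ltn s2 ->
  (forall a b, a \in s1 -> b \in s2 -> a < b) -> sorted ltn (s1 ++ s2).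
Proof.
case: s1 => //= x s1 p1 ps2 H; rewrite cat_path p1 /=.
case: s2 ps2 H => //= b s2 -> H; rewrite andbT; apply: H; last by rewrite inE eqxx.
exact: mem_last.
Qed.

Lemma sorted_cat_rel (s1 s2 : seq nat) a b : sorted ltn (s1 ++ s2) -> a \in s1 -> b \in s2 -> a < b.
Proof.
elim: s1 => //= x s1 IH p; rewrite inE => /orP[/eqP->|as1] bs2.
  have := order_path_min ltn_trans p => /allP; apply; by rewrite mem_cat bs2 orbT.
exact: IH (path_sorted p) as1 bs2.
Qed.

Lemma inf_seq (Y : nat -> Prop) : inf Y -> forall N m, exists s,
  [/\ size s = N, path ltn m s & forall b, b \in s -> Y b].
Proof.
move=> HY; elim=> [|N IH] m; first by exists [::].
have [y [my Yy]] := HY m.+1; have [s [sz ps Hs]] := IH y.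
exists (y :: s); split=> //=; first by rewrite sz.
  by rewrite my.
by move=> b; rewrite inE => /orP[/eqP->|/Hs].
Qed.

Definition An k n : {fset pt k} := [fset x in box k n].

Definition hn k (U : fun_assignment k) n (x : pt k) : option (pt k) :=
  match insub x : option (An k n) with
  | Some z => let y := val (U (An k n) z) in if tmax y < tmin x then Some y else None
  | None => None end.

Lemma hn_reg k (U : fun_assignment k) n x y : hn U n x = Some y -> tmax y < tmin x.
Proof. rewrite /hn; case: insub => // z; case: ifP => // h [<-] //. Qed.

Lemma hn_val k (U : fun_assignment k) n (z : An k n) :
  tmax (val (U _ z)) < tmin (val z) -> hn U n (val z) = Some (val (U _ z)).
Proof. by move=> h; rewrite /hn valK h. Qed.

Definition xmap k (t : k.-tuple 'I_k) (s : seq nat) : pt k := map_tuple (fun i : 'I_k => nth 0 s i) t.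

Lemma foldr_min_le (s : seq nat) d a : a \in s -> foldr minn d s <= a.
Proof.
elim: s => // b s IH; rewrite inE => /orP[/eqP->|/IH h] /=; rewrite geq_min ?leqnn //.
by rewrite h orbT.
Qed.

Theorem theorem0p6 (k p : nat) (hk : 0 < k) (hp : 0 < p) (U : fun_assignment k) :
  exists (A : {fset pt k}) (E : {fset nat}),
    [/\ #|` E| = p,
        (forall x : pt k, in_power E x -> x \in A) &
        #|` regressive_values U A E| <= k ^ k * p].
Proof.
case: k hk U => // k' _ U.
pose h n i : option (pt k'.+1) := if (choice.unpickle i : option (pt k'.+1)) is Some x then hn U n x else None.
pose Lc i : seq (option (pt k'.+1)) :=
  if (choice.unpickle i : option (pt k'.+1)) is Some x then None :: map Some (box k'.+1 (tmin x)) else [:: None].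
have HL : forall n i, h n i \in Lc i.
  move=> n i; rewrite /h /Lc; case: (choice.unpickle i) => [x|]; last by rewrite inE.
  case E: (hn U n x) => [y|]; last by rewrite inE.
  rewrite inE /= mem_map; last exact: Some_inj.
  rewrite mem_box; apply/allP => a ay; apply: ltnW; apply: leq_ltn_trans (hn_reg E).
  exact: foldr_max_ge.
have [g Hg] := compact HL.
pose H (x : pt k'.+1) := g (choice.pickle x).
have Hreg : forall x y, H x = Some y -> tmax y < tmin x.
  move=> x y Hx; have [n [_ Hn]] := Hg (choice.pickle x).+1 0.
  have := Hn (choice.pickle x) (ltnSn _); rewrite /h choice.pickleK -/(H x) Hx; exact: hn_reg.
have Hagr : forall M, exists n, M <= n /\ forall x, x \in box k'.+1 M -> hn U n x = H x.
  move=> M; have [n [Mn Hn]] := Hg (foldr maxn 0 (map choice.pickle (box k'.+1 M))).+1 M.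
  exists n; split=> // x xM; have := Hn (choice.pickle x); rewrite /h choice.pickleK; apply.
  by rewrite ltnS; apply: foldr_max_ge; exact: map_f.
pose c (t : k'.+1.-tuple 'I_k'.+1) s :=
  if [&& sorted ltn s, size s == k'.+1 & ord0 \in t] then H (xmap t s) else None.
have Hc : forall t a B, c t (a :: B) \in None :: map Some (box k'.+1 a).
  move=> t a B; rewrite /c; case: ifP => [/and3P[sB /eqP sz t0]|_]; last by rewrite inE.
  case E: (H _) => [y|]; last by rewrite inE.
  rewrite inE /= mem_map; last exact: Some_inj.
  rewrite mem_box; apply/allP => b yb; apply: ltnW; apply: leq_ltn_trans (foldr_max_ge yb) _.
  apply: leq_trans (Hreg _ _ E) _; rewrite /tmin; apply: foldr_min_le.
  exact: (map_f (fun i : 'I_k'.+1 => nth 0 (a :: B) i) t0).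
have [Y [HY _ HM]] := @MH_many _ _ _ c k' Hc (enum {: k'.+1.-tuple 'I_k'.+1}) (fun _ => True)
  (fun N => ex_intro _ N (conj (leqnn N) I)).
have [s [sz ps Ys]] := inf_seq HY (p + k'.+1) 0.
have ss : sorted ltn s := path_sorted ps.
pose E' := take p s; pose top := drop p s.
pose Mx := foldr maxn 0 s.
have [n [Mn Hn]] := Hagr Mx.
have Etop : forall a b, a \in E' -> b \in top -> a < b.
  by move=> a b; apply: sorted_cat_rel; rewrite cat_take_drop.
have sztop : size top = k'.+1 by rewrite size_drop sz addKn.
exists (An k'.+1 n), [fset a in E']; split.
- rewrite card_fseq undup_id ?size_takel ?sz ?leq_addr //.
  by apply: take_uniq; move: ss; rewrite ltn_sorted_uniq_leq => /andP[].
- move=> x /allP Hx; rewrite inE mem_box; apply/allP => a ax.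
  have := Hx a ax; rewrite inE => /mem_take aS; exact: leq_trans (foldr_max_ge aS) Mn.
pose x0 : pt k'.+1 := nseq_tuple k'.+1 0.
pose top' := take k' top.
pose Lst := [seq odflt x0 (c t (a :: top')) | t <- enum {: k'.+1.-tuple 'I_k'.+1}, a <- E'].
apply: (@leq_trans #|` [fset y in Lst]|).
  apply: fsubset_leq_card; apply/fsubsetP => y /imfsetP [z /= Pz ->].
  case/andP: Pz => zE zreg.
  have zEs : forall a, a \in val z -> a \in E'.
    by move=> a az; move/allP: zE => /(_ a az); rewrite inE.
  have Hx : H (val z) = Some (val (U _ z)).
    rewrite -(Hn (val z)) ?hn_val // mem_box; apply/allP => a az.
    exact: foldr_max_ge (mem_take (zEs a az)).
  set x := val z in zEs Hx *; set yv := val (U _ z) in Hx *.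
  pose S := sort leq (undup x).
  have Sx : forall a, (a \in S) = (a \in x) by move=> a; rewrite mem_sort mem_undup.
  have sS : sorted ltn S.
    by rewrite ltn_sorted_uniq_leq sort_uniq undup_uniq sort_sorted //; exact: leq_total.
  have szS : size S <= k'.+1.
    by rewrite size_sort; apply: leq_trans (size_undup _) _; rewrite size_tuple.
  pose pad := take (k'.+1 - size S) top.
  have sTop : sorted ltn top by exact: drop_sorted.
  have ss' : sorted ltn (S ++ pad).
    apply: sorted_cat_lt => //; first exact: take_sorted.
    move=> a b aS bp; apply: Etop; [apply: zEs; by rewrite -Sx | exact: mem_take bp].
  have szs' : size (S ++ pad) = k'.+1.
    by rewrite size_cat size_takel ?sztop ?leq_subr // subnKC.
  have xs' : forall b, b \in x -> b \in S ++ pad by move=> b bx; rewrite mem_cat Sx bx.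
  pose t := map_tuple (fun b => inord (index b (S ++ pad)) : 'I_k'.+1) x.
  have xt : xmap t (S ++ pad) = x.
    apply: val_inj => /=; rewrite -map_comp -[RHS]map_id; apply/eq_in_map => b bx /=.
    by rewrite inordK ?nth_index ?xs' // -szs' index_mem xs'.
  case eS : S sS ss' szs' xt => [|a B] sS ss' szs' xt.
    have : tnth x ord0 \in S by rewrite Sx mem_tnth.
    by rewrite eS.
  have ax : a \in x by rewrite -Sx eS inE eqxx.
  have t0 : ord0 \in t.
    have -> : ord0 = inord (index a (S ++ pad)) :> 'I_k'.+1.
      by apply: val_inj; rewrite /= eS /= eqxx inordK.
    exact: (map_f (fun b => inord (index b (S ++ pad)) : 'I_k'.+1) ax).
  have cs' : c t ((a :: B) ++ pad) = Some yv.
    by rewrite /c ss' szs' eqxx t0 /= xt Hx.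
  have aE : a \in E' by apply: zEs.
  have HYs : forall b, b \in s -> Y b by exact: Ys.
  have HMt := HM t (mem_enum _ _) a (B ++ pad) top' (HYs a (mem_take aE)).
  rewrite HMt in cs'.
  - rewrite inE; apply/allpairsP; exists (t, a); split => //=; first by rewrite mem_enum.
    by rewrite cs'.
  - exact: ss'.
  - apply: (sorted_cat_lt (s1 := [:: a])) => //; first exact: take_sorted.
    by move=> a' b; rewrite inE => /eqP-> /mem_take; apply: Etop.
  - by move: szs' => /= [].
  - by rewrite size_takel // sztop.
  - move=> b bB; apply: HYs; move: bB; rewrite mem_cat => /orP[bB|/mem_take/mem_drop //].
    by apply: mem_take; apply: zEs; rewrite -Sx eS inE bB orbT.
  - by move=> b /mem_take /mem_drop; apply: HYs.
rewrite card_fseq; apply: leq_trans (size_undup _) _.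
rewrite size_allpairs size_takel ?sz ?leq_addr // -cardE card_tuple card_ord.
done.
Qed.
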